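(* Let $m\in\mathbb{N}$. Then there is a bijection between the $m+m$ non-inclusive sum-and-distance systems and the $2m\times 2m$ principal reversible squares, and there is a bijection between the $m+m$ inclusive sum-and-distance systems and the $(2m+1)\times(2m+1)$ principal reversible squares.
   Context: Let $m\in\mathbb{N}$ and positive integers $a_1<\dots<a_m$, $b_1<\dots<b_m$. The pair $\{\{a_1,\dots,a_m\},\{b_1,\dots,b_m\}\}$ is an $m+m$ non-inclusive sum-and-distance system if $\{a_j+b_k,\ |a_j-b_k| : j,k\in\{1,\dots,m\}\}=\{1,3,5,\dots,4m^2-1\}$, and an $m+m$ inclusive sum-and-distance system if $\{a_j,\ b_k,\ a_j+b_k,\ |a_j-b_k| : j,k\in\{1,\dots,m\}\}=\{1,2,\dots,2m(m+1)\}$. For $n\in\mathbb{N}$, a reversible square matrix is a real matrix $M=(M_{i,j})$ with indices $i,j\in\mathbb{Z}_n=\mathbb{Z}/n\mathbb{Z}$ (top-left entry index $(1,1)$, indices computed modulo $n$) such that (R) $M_{i,j}+M_{i,n+1-j}=M_{i,k}+M_{i,n+1-k}$ and $M_{i,j}+M_{n+1-i,j}=M_{k,j}+M_{n+1-k,j}$ for all $i,j,k$, and (V) $M_{i,j}+M_{k,l}=M_{i,l}+M_{k,j}$ for all $i,j,k,l$. An $n\times n$ principal reversible square is a reversible square matrix whose set of entries is exactly $\{1,\dots,n^2\}$, whose entries increase along each row and each column, and with $M_{1,1}=1$, $M_{1,2}=2$. *)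

(* Defs.v *)
From HB Require Import structures.
From mathcomp Require Import all_boot all_order all_algebra.
From mathcomp Require Import finmap.
Set Implicit Arguments. Unset Strict Implicit. Unset Printing Implicit Defensive.
Import Order.TTheory GRing.Theory Num.Theory.
Local Open Scope fset_scope.

Definition ndist (a b : nat) : nat := (a - b) + (b - a).

(* A "pair" {A, B} of m-element sets of positive integers, encoded as the
   finite set S = {A, B} of finite sets.  (For m >= 1 the sum-and-distance
   condition forces A <> B, so S really has two elements.) *)
Definition sad_pair (m : nat) (S : {fset {fset nat}}) (A B : {fset nat}) : Prop :=
  [/\ S = [fset A; B], #|` A| = m, #|` B| = m, 0 \notin A & 0 \notin B].

Definition noninclusive_SAD (m : nat) (S : {fset {fset nat}}) : Prop :=
  exists A B : {fset nat}, sad_pair m S A B /\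
    forall x : nat,
      (exists a b, [/\ a \in A, b \in B & (x = (a + b)%N \/ x = ndist a b)]) <->
      (odd x /\ x < 4 * m ^ 2)%N.

Definition inclusive_SAD (m : nat) (S : {fset {fset nat}}) : Prop :=
  exists A B : {fset nat}, sad_pair m S A B /\
    forall x : nat,
      ((x \in A) \/ (x \in B) \/
       (exists a b, [/\ a \in A, b \in B & (x = (a + b)%N \/ x = ndist a b)])) <->
      (1 <= x /\ x <= 2 * m * (m + 1))%N.

Local Open Scope ring_scope.

(* Indices 1..n of the paper are the ordinals 0..n-1; the index n+1-j
   corresponds to rev_ord. *)
Definition reversible (n : nat) (M : 'M[int]_n) : Prop :=
  (forall i j k : 'I_n,
      M i j + M i (rev_ord j) = M i k + M i (rev_ord k)) /\
  (forall i j k : 'I_n,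
      M i j + M (rev_ord i) j = M k j + M (rev_ord k) j) /\
  (forall i j k l : 'I_n, M i j + M k l = M i l + M k j).

Definition principal_reversible_square (n : nat) (M : 'M[int]_n) : Prop :=
  [/\ reversible M,
      (forall x : int, (exists i j, M i j = x) <-> (1 <= x /\ x <= ((n ^ 2)%N)%:Z)),
      (forall i j k : 'I_n, (j < k)%N -> M i j < M i k),
      (forall i j k : 'I_n, (i < k)%N -> M i j < M k j)
    & exists i0 j1 : 'I_n, [/\ val i0 = 0%N, val j1 = 1%N,
                             M i0 i0 = 1 & M i0 j1 = 2]].

(* Main.v *)
Require Import Defs.
From HB Require Import structures.
From mathcomp Require Import all_boot all_order all_algebra.
From mathcomp Require Import finmap.
From mathcomp Require Import zify.
From Stdlib Require Import IndefiniteDescription ProofIrrelevance.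
Set Implicit Arguments. Unset Strict Implicit. Unset Printing Implicit Defensive.
Import Order.TTheory GRing.Theory Num.Theory.
Local Open Scope fset_scope.
Local Open Scope nat_scope.

Definition mx (R : {fset nat}) : nat := \max_(y <- R) y.

Lemma mx_ge (R : {fset nat}) y : y \in R -> (y <= mx R)%N.
Proof. by move=> yR; rewrite /mx (leq_bigmax_seq y). Qed.

Lemma mx_eq (R : {fset nat}) r : r \in R -> (forall y, y \in R -> y <= r)%N -> mx R = r.
Proof.
move=> rR hr; apply/eqP; rewrite eqn_leq mx_ge // andbT.
by apply/bigmax_leqP_seq => i iR _; apply: hr.
Qed.

Lemma bigmax_in (s : seq nat) : s != [::] -> \max_(j <- s) j \in s.
Proof.
elim: s => // a s IH _; rewrite big_cons inE.
case: s IH => [|b s] IH; first by rewrite big_nil maxn0 eqxx.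
have := IH isT; set M := \max_(j <- b :: s) j => hM.
by rewrite /maxn; case: ifP => _; [rewrite hM orbT | rewrite eqxx].
Qed.

Lemma mx_in (R : {fset nat}) y : y \in R -> mx R \in R.
Proof.
move=> yR; rewrite /mx; apply: bigmax_in.
by move: yR; rewrite -[y \in R]/(y \in enum_fset R); case: (enum_fset R).
Qed.

Definition incr n (f : 'I_n -> nat) := forall i j : 'I_n, (i < j)%N -> (f i < f j)%N.

Lemma incr_le n (f : 'I_n -> nat) : incr f -> forall i j : 'I_n, (i <= j)%N -> (f i <= f j)%N.
Proof.
move=> hf i j; rewrite leq_eqVlt => /orP [/eqP e|lt]; last by apply/ltnW/hf.
by rewrite (_ : i = j) //; apply: val_inj.
Qed.

Lemma incr_inj n (f : 'I_n -> nat) : incr f -> injective f.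
Proof.
move=> hf i j e; apply: val_inj; case: (ltngtP i j) => // h.
  by have := hf _ _ h; rewrite e ltnn.
by have := hf _ _ h; rewrite e ltnn.
Qed.

Lemma uniq_enum n (f g : 'I_n -> nat) : incr f -> incr g ->
  (forall i, exists j, g j = f i) -> (forall i, exists j, f j = g i) -> f =1 g.
Proof.
move=> hf hg fg gf.
suff H : forall k (i : 'I_n), (i < k)%N -> f i = g i by move=> i; apply: (H n).
elim=> [|k IH] i //; rewrite ltnS leq_eqVlt => /orP [/eqP ik|]; last exact: IH.
have [j ej] := fg i; have [j' ej'] := gf i.
have h1 : (i <= j)%N.
  rewrite leqNgt; apply/negP => ji.
  have := IH j; rewrite -ik => /(_ ji); rewrite ej => /(incr_inj hf) jie.
  by move: ji; rewrite jie ltnn.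
have h2 : (i <= j')%N.
  rewrite leqNgt; apply/negP => ji.
  have := IH j'; rewrite -ik => /(_ ji); rewrite ej' => /(incr_inj hg) jie.
  by move: ji; rewrite jie ltnn.
apply/eqP; rewrite eqn_leq.
have := incr_le hg h1; have := incr_le hf h2; rewrite ej ej' => -> ->; done.
Qed.

Lemma enum_exists (X : {fset nat}) n : #|` X| = n ->
  exists f : 'I_n -> nat, incr f /\ forall x, x \in X <-> exists i, f i = x.
Proof.
move=> cX; pose s := sort leq (enum_fset X).
have ss : size s = n by rewrite size_sort.
have so : sorted ltn s.
  by rewrite ltn_sorted_uniq_leq sort_uniq fset_uniq sort_sorted //; apply: leq_total.
exists (fun i => nth 0%N s i); split.
  move=> i j ij; apply: (sorted_ltn_nth ltn_trans) => //; rewrite inE ss ?ltn_ord //.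
move=> x; rewrite -[x \in X]/(x \in enum_fset X) -(mem_sort leq); split.
  by case/(nthP 0%N) => i; rewrite ss => ilt <-; exists (Ordinal ilt).
by case=> i <-; apply: mem_nth; rewrite ss ltn_ord.
Qed.

Definition symm (R : {fset nat}) := forall y, y \in R -> mx R - y \in R.

Lemma incr_sym n (f : 'I_n -> nat) (X : {fset nat}) : incr f ->
  (forall x, x \in X <-> exists i, f i = x) -> symm X ->
  forall i, f i + f (rev_ord i) = mx X.
Proof.
move=> hf hX hs.
have inX : forall i, f i \in X by move=> i; apply/hX; exists i.
pose g i := mx X - f (rev_ord i).
have hg : incr g.
  move=> i j ij; rewrite /g.
  have h1 : (f (rev_ord j) < f (rev_ord i))%N by apply: hf; rewrite /= ; have := ltn_ord i; have := ltn_ord j; lia.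
  have h2 := mx_ge (inX (rev_ord i)); lia.
have E : f =1 g.
  apply: (uniq_enum hf hg).
  - move=> j; have /hX [k ek] := hs _ (inX j); exists (rev_ord k); rewrite /g rev_ordK ek.
    have := mx_ge (inX j); lia.
  - move=> j; have /hX [k ek] := hs _ (inX (rev_ord j)); by exists k; rewrite ek.
move=> i; rewrite [f (rev_ord i)]E /g rev_ordK.
have := mx_ge (inX i); lia.
Qed.

Record Mid n (R C : {fset nat}) : Prop := MidI {
  midR : #|` R| = n; midC : #|` C| = n;
  midS : forall z, z < n ^ 2 <-> exists x y, [/\ x \in R, y \in C & z = x + y];
  midsR : symm R; midsC : symm C;
  midcR : (exists y, y \in R /\ 2 * y = mx R) <-> odd n;
  midcC : (exists y, y \in C /\ 2 * y = mx C) <-> odd n;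
  mid0R : 0 \in R; mid0C : 0 \in C; mid1C : 1 \in C }.

Lemma mid_sum n R C : 0 < n -> Mid n R C -> mx R + mx C = n ^ 2 - 1.
Proof.
move=> n0 M.
have rR := mx_in (mid0R M); have rC := mx_in (mid0C M).
have h1 : mx R + mx C < n ^ 2 by apply/(midS M); exists (mx R), (mx C).
have [x [y [xR yC e]]] : exists x y, [/\ x \in R, y \in C & n ^ 2 - 1 = x + y].
  apply/(midS M); have : 0 < n ^ 2 by rewrite expn_gt0 n0.
  set N := n ^ 2; lia.
have := mx_ge xR; have := mx_ge yC; move: h1 e; set N := n ^ 2; lia.
Qed.

Lemma uniq_map_inj (T1 T2 : eqType) (g : T1 -> T2) s :
  uniq (map g s) -> {in s &, injective g}.
Proof.
move=> U p q ps qs e.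
have := uniqP (g p) U (index p s) (index q s).
rewrite !inE size_map !index_mem => /(_ ps qs).
rewrite !(nth_map p) ?index_mem // !nth_index // => /(_ e) h.
by rewrite -(nth_index p ps) -(nth_index p qs) h.
Qed.

Lemma mid_uniq n R C : Mid n R C -> forall x1 x2 y1 y2,
  x1 \in R -> x2 \in R -> y1 \in C -> y2 \in C -> x1 + y1 = x2 + y2 -> x1 = x2.
Proof.
move=> M x1 x2 y1 y2 h1 h2 h3 h4 e.
pose s := [seq x + y | x <- enum_fset R, y <- enum_fset C].
have us : uniq s.
  apply: (leq_size_uniq (iota_uniq 0 (n ^ 2))).
    move=> z; rewrite mem_iota add0n => /(midS M) [x [y [xR yC ->]]].
    exact: allpairs_f.
  by rewrite size_allpairs size_iota (midR M) (midC M) expnS expn1.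
move: us; rewrite /s -(map_allpairs (fun p : nat * nat => p.1 + p.2) pair) => us.
have := uniq_map_inj us (allpairs_f pair h1 h3) (allpairs_f pair h2 h4) e.
by case.
Qed.


Section Sq.
Variable n : nat.
Hypothesis hn : 1 < n.

Definition z0 : 'I_n := Ordinal (ltnW hn).
Definition z1 : 'I_n := Ordinal hn.

Definition imf (f : 'I_n -> nat) : {fset nat} := [fset f i | i : 'I_n].

Lemma imfP f x : x \in imf f <-> exists i, f i = x.
Proof.
split; first by case/imfsetP => i _ ->; exists i.
by case=> i <-; apply/imfsetP; exists i.
Qed.

Lemma imf_card f : incr f -> #|` imf f| = n.
Proof. by move=> hf; rewrite card_imfset /= ?size_enum_ord //; apply: incr_inj. Qed.

Lemma imf_props (f : 'I_n -> nat) : incr f -> f z0 = 0 ->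
  (forall i, f i + f (rev_ord i) = f (rev_ord z0)) ->
  [/\ mx (imf f) = f (rev_ord z0), symm (imf f),
      (exists y, y \in imf f /\ 2 * y = mx (imf f)) <-> odd n & 0 \in imf f].
Proof.
move=> hf f0 hs.
have fin i : f i \in imf f by apply/imfP; exists i.
have hmx : mx (imf f) = f (rev_ord z0).
  apply: mx_eq => // y /imfP [i <-]; apply: (incr_le hf) => /=.
  have := ltn_ord i; lia.
split => //.
- move=> y /imfP [i <-]; rewrite hmx -(hs i) addKn; exact: fin.
- rewrite hmx; split.
    case=> y [/imfP [i <-] e]; have e2 : f i = f (rev_ord i) by have := hs i; lia.
    have := congr1 val (incr_inj hf e2) => /=; have := ltn_ord i; lia.
  move=> on; have hlt : (n./2 < n) by lia.
  exists (f (Ordinal hlt)); split => //.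
  have := hs (Ordinal hlt); rewrite (_ : rev_ord (Ordinal hlt) = Ordinal hlt) //; first lia.
  apply: val_inj => /=; lia.
- by rewrite -f0.
Qed.

Definition rf (M : 'M[int]_n) i := absz (M i z0 - 1)%R.
Definition cf (M : 'M[int]_n) j := absz (M z0 j - 1)%R.

Lemma sq_facts M : principal_reversible_square M ->
  (forall i j, M i j = Posz (rf M i + cf M j + 1)) /\
      incr (rf M) /\ incr (cf M) /\
      [/\ rf M z0 = 0, cf M z0 = 0 & cf M z1 = 1] /\
      (forall i, rf M i + rf M (rev_ord i) = rf M (rev_ord z0)) /\
      (forall j, cf M j + cf M (rev_ord j) = cf M (rev_ord z0)) /\
      (forall z, z < n ^ 2 <-> exists i j, rf M i + cf M j = z).
Proof.
case=> [[hR1 [hR2 hV]] hE hrow hcol [i0 [j1 [v0 v1 e0 e1]]]].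
have ei : i0 = z0 by apply: val_inj.
have ej : j1 = z1 by apply: val_inj.
rewrite ei ej in e0 e1.
have bnd i j : (1 <= M i j /\ M i j <= Posz (n ^ 2))%R.
  by apply/(hE (M i j)); exists i, j.
have eij i j : M i j = Posz (rf M i + cf M j + 1).
  have := hV i j z0 z0; rewrite /rf /cf.
  have := bnd i z0; have := bnd z0 j; rewrite e0; lia.
split => //; split; [|split; [|split; [|split; [|split]]]].
- move=> i k ik; have := hcol i z0 k ik; rewrite /rf.
  have := bnd i z0; have := bnd k z0; lia.
- move=> j k jk; have := hrow z0 j k jk; rewrite /cf.
  have := bnd z0 j; have := bnd z0 k; lia.
- by rewrite /rf /cf e0 e1.
- move=> i; have := hR2 i z0 z0; rewrite !eij /rf e0; lia.
- move=> j; have := hR1 z0 j z0; rewrite !eij /cf e0; lia.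
- move=> z; split.
    move=> zlt; have [i [j e]] : exists i j, M i j = Posz (z + 1).
      by apply/hE; set N := (n ^ 2)%N; lia.
    by exists i, j; move: e; rewrite eij; lia.
  case=> i [j <-]; have := bnd i j; rewrite eij; set N := (n ^ 2)%N; lia.
Qed.

Definition Rs M := imf (rf M).
Definition Cs M := imf (cf M).

Lemma sq_mid M : principal_reversible_square M -> Mid n (Rs M) (Cs M).
Proof.
move=> hM; have [eij [hr [hc [[r0 c0 c1] [sr [sc hS]]]]]] := sq_facts hM.
have [mR sR cR zR] := imf_props hr r0 sr.
have [mC sC cC zC] := imf_props hc c0 sc.
apply: MidI; try exact: imf_card; try done.
- move=> z; rewrite hS; split.
    by case=> i [j <-]; exists (rf M i), (cf M j); split => //; apply/imfP; [exists i|exists j].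
  by case=> x [y [/imfP [i <-] /imfP [j <-] ->]]; exists i, j.
- by apply/imfP; exists (z1).
Qed.

Lemma sq_inj M1 M2 : principal_reversible_square M1 -> principal_reversible_square M2 ->
  Rs M1 = Rs M2 -> Cs M1 = Cs M2 -> M1 = M2.
Proof.
move=> h1 h2 eR eC.
have [eij1 [hr1 [hc1 _]]] := sq_facts h1.
have [eij2 [hr2 [hc2 _]]] := sq_facts h2.
have er : rf M1 =1 rf M2.
  apply: uniq_enum => // i.
    have : rf M1 i \in Rs M2 by rewrite -eR; apply/imfP; exists i.
    by case/imfP => j <-; exists j.
  have : rf M2 i \in Rs M1 by rewrite eR; apply/imfP; exists i.
  by case/imfP => j <-; exists j.
have ec : cf M1 =1 cf M2.
  apply: uniq_enum => // i.
    have : cf M1 i \in Cs M2 by rewrite -eC; apply/imfP; exists i.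
    by case/imfP => j <-; exists j.
  have : cf M2 i \in Cs M1 by rewrite eC; apply/imfP; exists i.
  by case/imfP => j <-; exists j.
by apply/matrixP => i j; rewrite eij1 eij2 er ec.
Qed.

Lemma sq_surj R C : Mid n R C -> exists M,
  [/\ principal_reversible_square M, Rs M = R & Cs M = C].
Proof.
move=> hM.
have [r [hr hRe]] := enum_exists (midR hM).
have [c [hc hCe]] := enum_exists (midC hM).
have r0 : r z0 = 0.
  have /hRe [k ek] := mid0R hM; have := incr_le hr (leq0n k : z0 <= k); lia.
have c0 : c z0 = 0.
  have /hCe [k ek] := mid0C hM; have := incr_le hc (leq0n k : z0 <= k); lia.
have c1 : c z1 = 1.
  have /hCe [k ek] := mid1C hM.
  have k1 : z1 <= k.
    rewrite /= lt0n; apply/negP => /eqP k0.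
    by move: ek; rewrite (_ : k = z0) ?c0 //; apply: val_inj.
  have := incr_le hc k1; have := hc z0 z1 (ltnSn 0); lia.
have sr := incr_sym hr hRe (midsR hM).
have sc := incr_sym hc hCe (midsC hM).
have rin i : r i \in R by apply/hRe; exists i.
have cin j : c j \in C by apply/hCe; exists j.
have bnd i j : r i + c j < n ^ 2 by apply/(midS hM); exists (r i), (c j).
pose M : 'M[int]_n := (\matrix_(i, j) Posz (r i + c j + 1))%R.
have rfM i : rf M i = r i by rewrite /rf !mxE c0; lia.
have cfM j : cf M j = c j by rewrite /cf !mxE r0; lia.
exists M; split.
- split.
  + split; [|split].
    * move=> i j k; rewrite !mxE; have := sc j; have := sc k; lia.
    * move=> i j k; rewrite !mxE; have := sr i; have := sr k; lia.
    * move=> i j k l; rewrite !mxE; lia.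
  + move=> x; split.
      by case=> i [j <-]; rewrite mxE; have := bnd i j; set N := (n ^ 2)%N; lia.
    move=> hx; have : (absz x - 1 < n ^ 2) by move: hx; set N := (n ^ 2)%N; lia.
    case/(midS hM) => x' [y' [/hRe [i ei] /hCe [j ej] e]].
    exists i, j; rewrite mxE; move: hx; set N := (n ^ 2)%N; lia.
  + move=> i j k jk; rewrite !mxE; have := hc j k jk; lia.
  + move=> i j k ik; rewrite !mxE; have := hr i k ik; lia.
  + exists z0, z1; split => //; rewrite mxE ?r0 ?c0 ?c1 //.
- apply/fsetP => x; apply/idP/idP.
    by case/imfP => i <-; rewrite rfM.
  by case/hRe => i <-; apply/imfP; exists i.
- apply/fsetP => x; apply/idP/idP.
    by case/imfP => i <-; rewrite cfM.
  by case/hCe => i <-; apply/imfP; exists i.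
Qed.

End Sq.


Definition AofE (R : {fset nat}) : {fset nat} := [fset mx R - 2 * y | y in R] `\ 0.
Definition RofE r (A : {fset nat}) : {fset nat} :=
  [fset (r - a)./2 | a in A] `|` [fset (r + a)./2 | a in A].

Lemma AofEP R a : a \in AofE R <-> 0 < a /\ exists y, y \in R /\ a = mx R - 2 * y.
Proof.
rewrite in_fsetD1; split.
  by case/andP => a0 /imfsetP [y /= yR ea]; split; [lia|exists y].
case=> a0 [y [yR ea]]; subst a; apply/andP; split; first lia.
by apply/imfsetP; exists y.
Qed.

Lemma RofEP r A x : x \in RofE r A <-> exists a, a \in A /\ (x = (r - a)./2 \/ x = (r + a)./2).
Proof.
rewrite in_fsetU; split.
  case/orP => /imfsetP [a /= aA ->]; exists a; tauto.
case=> a [aA [->|->]]; apply/orP; [left|right]; apply/imfsetP; by exists a.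
Qed.

Lemma in_AofE R y : symm R -> y \in R -> 2 * y <> mx R -> ndist (2 * y) (mx R) \in AofE R.
Proof.
move=> sR yR ne; have := mx_ge yR => yle; apply/AofEP; rewrite /ndist; split; first lia.
case: (ltnP (2 * y) (mx R)) => h.
  by exists y; split => //; lia.
exists (mx R - y); split; [exact: sR | lia].
Qed.

Lemma recE R : symm R -> (forall y, y \in R -> 2 * y <> mx R) -> RofE (mx R) (AofE R) = R.
Proof.
move=> sR nc; apply/fsetP => x; apply/idP/idP.
  case/RofEP => a [/AofEP [a0 [y [yR ea]]] ex].
  have := mx_ge yR => yle.
  case: ex => ex.
    by have -> : x = y by lia.
  have -> : x = mx R - y by lia.
  exact: sR.
move=> xR; apply/RofEP; exists (ndist (2 * x) (mx R)); split.
  by apply: in_AofE => //; apply: nc.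
have := mx_ge xR; have := nc _ xR; rewrite /ndist; lia.
Qed.

Lemma mxAE R : symm R -> 0 \in R -> 0 < mx R -> mx (AofE R) = mx R.
Proof.
move=> sR zR m0; apply: mx_eq.
  by apply/AofEP; split => //; exists 0; split => //; lia.
by move=> a /AofEP [_ [y [_ ->]]]; lia.
Qed.

Definition goodE r (A : {fset nat}) := forall a, a \in A -> [/\ 0 < a, a <= r & odd a = odd r].

Lemma goodAE R : goodE (mx R) (AofE R).
Proof. by move=> a /AofEP [a0 [y [_ ea]]]; subst a; split; lia. Qed.

Lemma cardRofE r A : goodE r A -> #|` RofE r A| = 2 * #|` A|.
Proof.
move=> g; rewrite cardfsU.
have -> : [fset (r - a)./2 | a in A] `&` [fset (r + a)./2 | a in A] = fset0.
  apply/fsetP => x; rewrite in_fsetI in_fset0; apply/negP => /andP [].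
  case/imfsetP => a /= aA ->; case/imfsetP => b /= bA e.
  have [? ? ?] := g _ aA; have [? ? ?] := g _ bA; lia.
rewrite !card_in_imfset /=; first lia.
- move=> a b aA bA /= e; have [? ? ?] := g _ aA; have [? ? ?] := g _ bA; lia.
- move=> a b aA bA /= e; have [? ? ?] := g _ aA; have [? ? ?] := g _ bA; lia.
Qed.

Lemma mxRofE r A : goodE r A -> r \in A -> mx (RofE r A) = r.
Proof.
move=> g rA; apply: mx_eq.
  by apply/RofEP; exists r; split => //; right; lia.
by move=> x /RofEP [a [aA ex]]; have [? ? ?] := g _ aA; lia.
Qed.

Lemma AofE_Rof r A : goodE r A -> r \in A -> AofE (RofE r A) = A.
Proof.
move=> g rA; apply/fsetP => a; rewrite -/(AofE _); apply/idP/idP.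
  case/AofEP => a0 [y [/RofEP [b [bA ey]] ea]].
  rewrite mxRofE // in ea; have [? ? ?] := g _ bA.
  by have -> : a = b by lia.
move=> aA; apply/AofEP; have [? ? ?] := g _ aA; split; first lia.
exists ((r - a)./2); split; last by rewrite mxRofE //; lia.
by apply/RofEP; exists a; split => //; left.
Qed.

Definition AofO (R : {fset nat}) : {fset nat} := [fset (mx R)./2 - y | y in R] `\ 0.
Definition RofO h (A : {fset nat}) : {fset nat} :=
  h |` ([fset h - a | a in A] `|` [fset h + a | a in A]).

Lemma AofOP R a : a \in AofO R <-> 0 < a /\ exists y, y \in R /\ a = (mx R)./2 - y.
Proof.
rewrite in_fsetD1; split.
  by case/andP => a0 /imfsetP [y /= yR ea]; split; [lia|exists y].
case=> a0 [y [yR ea]]; subst a; apply/andP; split; first lia.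
by apply/imfsetP; exists y.
Qed.

Lemma RofOP h A x : x \in RofO h A <-> x = h \/ exists a, a \in A /\ (x = h - a \/ x = h + a).
Proof.
rewrite in_fset1U in_fsetU; split.
  case/orP => [/eqP ->|]; first by left.
  case/orP => /imfsetP [a /= aA ->]; right; exists a; tauto.
case=> [->|]; first by rewrite eqxx.
case=> a [aA [->|->]]; apply/orP; right; apply/orP; [left|right]; apply/imfsetP; by exists a.
Qed.

Lemma in_AofO R y : symm R -> ~~ odd (mx R) -> y \in R -> y <> (mx R)./2 ->
  ndist y (mx R)./2 \in AofO R.
Proof.
move=> sR ev yR ne; have := mx_ge yR => yle; apply/AofOP; rewrite /ndist; split; first lia.
case: (ltnP y (mx R)./2) => h.
  by exists y; split => //; lia.
exists (mx R - y); split; [exact: sR | lia].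
Qed.

Lemma recO R : symm R -> ~~ odd (mx R) -> (mx R)./2 \in R ->
  RofO (mx R)./2 (AofO R) = R.
Proof.
move=> sR ev hR; apply/fsetP => x; apply/idP/idP.
  case/RofOP => [->//|[a [/AofOP [a0 [y [yR ea]]] ex]]].
  have := mx_ge yR => yle.
  case: ex => ex.
    by have -> : x = y by lia.
  have -> : x = mx R - y by lia.
  exact: sR.
move=> xR; apply/RofOP.
case: (eqVneq x (mx R)./2) => [->|ne]; first by left.
right; exists (ndist x (mx R)./2); split.
  by apply: in_AofO => //; apply/eqP.
have := mx_ge xR; move: ne => /eqP; rewrite /ndist; lia.
Qed.

Lemma mxAO R : symm R -> 0 \in R -> 0 < (mx R)./2 -> mx (AofO R) = (mx R)./2.
Proof.
move=> sR zR m0; apply: mx_eq.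
  by apply/AofOP; split => //; exists 0; split => //; lia.
by move=> a /AofOP [_ [y [_ ->]]]; lia.
Qed.

Definition goodO h (A : {fset nat}) := forall a, a \in A -> 0 < a <= h.

Lemma goodAO R : goodO (mx R)./2 (AofO R).
Proof. by move=> a /AofOP [a0 [y [_ ea]]]; subst a; lia. Qed.

Lemma cardRofO h A : goodO h A -> #|` RofO h A| = (2 * #|` A|).+1.
Proof.
move=> g; rewrite cardfsU1 cardfsU.
have -> : [fset h - a | a in A] `&` [fset h + a | a in A] = fset0.
  apply/fsetP => x; rewrite in_fsetI in_fset0; apply/negP => /andP [].
  case/imfsetP => a /= aA ->; case/imfsetP => b /= bA e.
  have := g _ aA; have := g _ bA; move: e; lia.
have -> : h \notin [fset h - a | a in A] `|` [fset h + a | a in A].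
  rewrite in_fsetU; apply/negP => /orP [] /imfsetP [a /= aA e]; have := g _ aA; lia.
rewrite !card_in_imfset /=; first lia.
- move=> a b aA bA /= e; have := g _ aA; have := g _ bA; move: e; lia.
- move=> a b aA bA /= e; have := g _ aA; have := g _ bA; move: e; lia.
Qed.

Lemma mxRofO h A : goodO h A -> h \in A -> mx (RofO h A) = 2 * h.
Proof.
move=> g hA; apply: mx_eq.
  by apply/RofOP; right; exists h; split => //; right; lia.
by move=> x /RofOP [->|[a [aA ex]]]; [lia | have := g _ aA; lia].
Qed.

Lemma AofO_Rof h A : goodO h A -> h \in A -> AofO (RofO h A) = A.
Proof.
move=> g hA; apply/fsetP => a; apply/idP/idP.
  case/AofOP => a0 [y [/RofOP hy ea]].
  rewrite mxRofO // in ea.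
  case: hy => [ey|[b [bA ey]]]; first lia.
  have := g _ bA => gb.
  by have -> : a = b by lia.
move=> aA; apply/AofOP; have := g _ aA => ga; split; first lia.
exists (h - a); split; last by rewrite mxRofO //; lia.
by apply/RofOP; right; exists a; split => //; left.
Qed.


Lemma mid_sadE m R C : 0 < m -> Mid (2 * m) R C -> noninclusive_SAD m [fset AofE R; AofE C].
Proof.
move=> m0 M.
have hs := mid_sum (ltac:(lia) : 0 < 2 * m) M.
have e4 : (2 * m) ^ 2 = 4 * m ^ 2 by nia.
rewrite e4 in hs.
have ncR : forall y, y \in R -> 2 * y <> mx R.
  by move=> y yR e; have := (midcR M).1 (ex_intro _ y (conj yR e)); lia.
have ncC : forall y, y \in C -> 2 * y <> mx C.
  by move=> y yC e; have := (midcC M).1 (ex_intro _ y (conj yC e)); lia.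
have cA : #|` AofE R| = m.
  have := cardRofE (@goodAE R); rewrite (recE (midsR M) ncR) (midR M); lia.
have cB : #|` AofE C| = m.
  have := cardRofE (@goodAE C); rewrite (recE (midsC M) ncC) (midC M); lia.
exists (AofE R), (AofE C); split.
  split => //; apply/negP => /AofEP [] //.
have hS := midS M; rewrite e4 in hS.
move: hs hS; set N := m ^ 2 => hs hS.
move=> x; split.
  case=> a [b [/AofEP [a0 [y1 [y1R ea]]] /AofEP [b0 [y2 [y2C eb]]] ex]].
  have := mx_ge y1R; have := mx_ge y2C.
  have h1 : y1 + y2 < 4 * N by apply/hS; exists y1, y2.
  have h2 : (mx R - y1) + y2 < 4 * N by apply/hS; exists (mx R - y1), y2; split => //; apply: (midsR M).
  rewrite /ndist in ex; lia.
case=> ox xlt.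
have [y1 [y2 [y1R y2C ez]]] : exists y1 y2, [/\ y1 \in R, y2 \in C & (4 * N - 1 + x)./2 = y1 + y2].
  by apply/hS; lia.
exists (ndist (2 * y1) (mx R)), (ndist (2 * y2) (mx C)); split.
- by apply: in_AofE => //; [apply: (midsR M) | apply: ncR].
- by apply: in_AofE => //; [apply: (midsC M) | apply: ncC].
- have := ncR _ y1R; have := ncC _ y2C; have := mx_ge y1R; have := mx_ge y2C.
  rewrite /ndist; lia.
Qed.

Lemma mid_sadO m R C : 0 < m -> Mid (2 * m + 1) R C -> inclusive_SAD m [fset AofO R; AofO C].
Proof.
move=> m0 M.
have hs := mid_sum (ltac:(lia) : 0 < 2 * m + 1) M.
have e4 : (2 * m + 1) ^ 2 = 4 * m ^ 2 + 4 * m + 1 by nia.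
have e2 : 2 * m * (m + 1) = 2 * m ^ 2 + 2 * m by nia.
rewrite e4 in hs.
have [h [hR eh]] : exists y, y \in R /\ 2 * y = mx R by apply/(midcR M); lia.
have [k [kC ek]] : exists y, y \in C /\ 2 * y = mx C by apply/(midcC M); lia.
have hR' : (mx R)./2 \in R by rewrite -eh; have -> : (2 * h)./2 = h by lia.
have kC' : (mx C)./2 \in C by rewrite -ek; have -> : (2 * k)./2 = k by lia.
have evR : ~~ odd (mx R) by lia.
have evC : ~~ odd (mx C) by lia.
have cA : #|` AofO R| = m.
  have := cardRofO (@goodAO R); rewrite (recO (midsR M) evR hR') (midR M); lia.
have cB : #|` AofO C| = m.
  have := cardRofO (@goodAO C); rewrite (recO (midsC M) evC kC') (midC M); lia.
exists (AofO R), (AofO C); split.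
  split => //; apply/negP => /AofOP [] //.
have hS := midS M; rewrite e4 in hS.
have U := mid_uniq M.
rewrite e2.
move: hs hS; set N := m ^ 2 => hs hS.
move=> x; split.
  case=> [/AofOP [a0 [y [yR ea]]]|[/AofOP [a0 [y [yC ea]]]|]].
  - have := mx_ge yR; lia.
  - have := mx_ge yC; lia.
  case=> a [b [/AofOP [a0 [y1 [y1R ea]]] /AofOP [b0 [y2 [y2C eb]]] ex]].
  have := mx_ge y1R; have := mx_ge y2C.
  have h2 : (mx R - y1) + y2 < 4 * N + 4 * m + 1.
    by apply/hS; exists (mx R - y1), y2; split => //; apply: (midsR M).
  have ne : a <> b.
    move=> eab; have := U y1 h k y2 y1R hR kC y2C; lia.
  rewrite /ndist in ex; lia.
case=> x1 x2.
have [y1 [y2 [y1R y2C ez]]] : exists y1 y2, [/\ y1 \in R, y2 \in C & h + k + x = y1 + y2].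
  by apply/hS; lia.
have := mx_ge y1R; have := mx_ge y2C => l2 l1.
case: (eqVneq y1 (mx R)./2) => [e1|n1].
  right; left; have -> : x = ndist y2 (mx C)./2 by rewrite /ndist; lia.
  by apply: in_AofO => //; [apply: (midsC M) | move=> e; move: ez; lia].
case: (eqVneq y2 (mx C)./2) => [e2'|n2].
  left; have -> : x = ndist y1 (mx R)./2 by rewrite /ndist; lia.
  by apply: in_AofO => //; [apply: (midsR M) | apply/eqP].
right; right.
exists (ndist y1 (mx R)./2), (ndist y2 (mx C)./2); split.
- by apply: in_AofO => //; [apply: (midsR M) | apply/eqP].
- by apply: in_AofO => //; [apply: (midsC M) | apply/eqP].
- move: n1 n2 => /eqP n1 /eqP n2; rewrite /ndist; lia.
Qed.

Lemma fset2C (T : choiceType) (a b : T) : [fset a; b] = [fset b; a].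
Proof. by apply/fsetP => x; rewrite !in_fset2 orbC. Qed.

Lemma mk_mid n R C : #|` R| = n -> #|` C| = n ->
  (forall z, z < n ^ 2 <-> exists x y, [/\ x \in R, y \in C & z = x + y]) ->
  symm R -> symm C ->
  ((exists y, y \in R /\ 2 * y = mx R) <-> odd n) ->
  ((exists y, y \in C /\ 2 * y = mx C) <-> odd n) ->
  0 \in R -> 0 \in C -> 1 \in C \/ 1 \in R -> Mid n R C \/ Mid n C R.
Proof.
move=> h1 h2 h3 h4 h5 h6 h7 h8 h9 [] h10; [left|right]; split => //.
move=> z; rewrite h3; split; case=> x [y [xR yC ->]]; exists y, x; split => //; lia.
Qed.

Lemma memRofE r A a : a \in A -> (r - a)./2 \in RofE r A /\ (r + a)./2 \in RofE r A.
Proof. by move=> aA; split; apply/RofEP; exists a; split => //; [left|right]. Qed.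

Lemma halfE r A : goodE r A -> r \in A ->
  [/\ mx (RofE r A) = r, symm (RofE r A),
      (forall y, y \in RofE r A -> 2 * y <> mx (RofE r A)) & 0 \in RofE r A].
Proof.
move=> g rA; have mR := mxRofE g rA; split => //.
- rewrite /symm mR => y /RofEP [a [aA ey]]; have [? ? ?] := g _ aA.
  case: ey => ->; apply/RofEP; exists a; split => //; [right|left]; lia.
- rewrite mR => y /RofEP [a [aA ey]]; have [? ? ?] := g _ aA; lia.
- by apply/RofEP; exists r; split => //; left; lia.
Qed.

Lemma arE1 a al b : odd (a + b) -> odd (al + b) -> a <= al -> 0 < a -> [/\ 0 < a, a <= al & odd a = odd al].
Proof. by move=> *; split; lia. Qed.

Lemma arE2 a b al be N : a <= al -> b <= be -> odd (al + be) -> al + be < 4 * N ->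
  (4 * N - 1 = a + b \/ 4 * N - 1 = ndist a b) -> al + be = 4 * N - 1.
Proof. rewrite /ndist; lia. Qed.

Lemma arE3 a b al be N x y : [/\ 0 < a, a <= al & odd a = odd al] -> [/\ 0 < b, b <= be & odd b = odd be] ->
  al + be = 4 * N - 1 -> a + b < 4 * N -> ndist a b < 4 * N ->
  (x = (al - a)./2 \/ x = (al + a)./2) -> (y = (be - b)./2 \/ y = (be + b)./2) -> x + y < 4 * N.
Proof. rewrite /ndist; lia. Qed.

Lemma arE4 a b al be N z : [/\ 0 < a, a <= al & odd a = odd al] -> [/\ 0 < b, b <= be & odd b = odd be] ->
  al + be = 4 * N - 1 -> z < 4 * N ->
  (ndist (2 * z + 1) (4 * N) = a + b \/ ndist (2 * z + 1) (4 * N) = ndist a b) ->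
  exists s t : bool, z = (if s then (al + a)./2 else (al - a)./2) + (if t then (be + b)./2 else (be - b)./2).
Proof.
move=> [? ? ?] [? ? ?] hab hz; rewrite /ndist => ew.
case: (leqP (4 * N) (2 * z + 1)) => h; case: (leqP b a) => hba.
- case: ew => ew; [exists true, true | exists true, false]; lia.
- case: ew => ew; [exists true, true | exists false, true]; lia.
- case: ew => ew; [exists false, false | exists false, true]; lia.
- case: ew => ew; [exists false, false | exists true, false]; lia.
Qed.

Lemma arOne x y : 1 = x + y -> x = 1 \/ y = 1.
Proof. lia. Qed.

Lemma sad_midE m S : 0 < m -> noninclusive_SAD m S ->
  exists R C, Mid (2 * m) R C /\ [fset AofE R; AofE C] = S.
Proof.
move=> m0 [A [B [[eS cA cB a0 b0] cov]]].
have e4 : (2 * m) ^ 2 = 4 * m ^ 2 by nia.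
have N1 : 0 < m ^ 2 by rewrite expn_gt0 m0.
move: cov N1; set N := m ^ 2 => cov N1.
have /fset0Pn [a1 a1A] : A != fset0 by rewrite -cardfs_gt0 cA.
have /fset0Pn [b1 b1B] : B != fset0 by rewrite -cardfs_gt0 cB.
have aM := mx_in a1A; have bM := mx_in b1B.
have posA a : a \in A -> 0 < a by move=> aA; rewrite lt0n; apply: contraNneq a0 => <-.
have posB b : b \in B -> 0 < b by move=> bB; rewrite lt0n; apply: contraNneq b0 => <-.
have sumo a b : a \in A -> b \in B -> odd (a + b) /\ a + b < 4 * N.
  by move=> aA bB; apply/cov; exists a, b; split => //; left.
have difo a b : a \in A -> b \in B -> odd (ndist a b) /\ ndist a b < 4 * N.
  by move=> aA bB; apply/cov; exists a, b; split => //; right.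
have gA : goodE (mx A) A.
  move=> a aA; have [h1 _] := sumo _ _ aA bM; have [h2 _] := sumo _ _ aM bM.
  exact: (arE1 h1 h2 (mx_ge aA) (posA _ aA)).
have gB : goodE (mx B) B.
  move=> b bB; have [h1 _] := sumo _ _ aM bB; have [h2 _] := sumo _ _ aM bM.
  rewrite [_ + b]addnC [mx A + _]addnC in h1 h2; exact: (arE1 h1 h2 (mx_ge bB) (posB _ bB)).
have hab : mx A + mx B = 4 * N - 1.
  have [a [b [aA bB eab]]] : exists a b, [/\ a \in A, b \in B & (4 * N - 1 = a + b \/ 4 * N - 1 = ndist a b)].
    by apply/cov; clear -N1; lia.
  have [h1 h2] := sumo _ _ aM bM.
  exact: (arE2 (mx_ge aA) (mx_ge bB) h1 h2 eab).
set R := RofE (mx A) A; set C := RofE (mx B) B.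
have [mR sR nR zR] := halfE gA aM.
have [mC sC nC zC] := halfE gB bM.
have sumE : forall z, z < 4 * N <-> exists x y, [/\ x \in R, y \in C & z = x + y].
  move=> z; split; last first.
    case=> x [y [/RofEP [a [aA ex]] /RofEP [b [bB ey]] ->]].
    have [_ h1] := sumo _ _ aA bB; have [_ h2] := difo _ _ aA bB.
    exact: (arE3 (gA _ aA) (gB _ bB) hab h1 h2 ex ey).
  move=> zlt.
  have [a [b [aA bB ew]]] : exists a b, [/\ a \in A, b \in B &
      (ndist (2 * z + 1) (4 * N) = a + b \/ ndist (2 * z + 1) (4 * N) = ndist a b)].
    by apply/cov; rewrite /ndist; clear -zlt; lia.
  have [s [t ez]] := arE4 (gA _ aA) (gB _ bB) hab zlt ew.
  exists (if s then (mx A + a)./2 else (mx A - a)./2), (if t then (mx B + b)./2 else (mx B - b)./2).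
  split => //; [case: s {ez}; [exact: (memRofE _ aA).2 | exact: (memRofE _ aA).1]
   | case: t {ez}; [exact: (memRofE _ bB).2 | exact: (memRofE _ bB).1]].
have one : 1 \in C \/ 1 \in R.
  have [x [y [xR yC e1]]] := (sumE 1).1 ltac:(clear -N1; lia).
  by case: (arOne e1) => e; [right; rewrite -e | left; rewrite -e].
have cR : #|` R| = 2 * m by rewrite cardRofE // cA.
have cC : #|` C| = 2 * m by rewrite cardRofE // cB.
have ctR : (exists y, y \in R /\ 2 * y = mx R) <-> odd (2 * m).
  split; [case=> y [yR e]; by case: (nR y yR e) | clear; lia].
have ctC : (exists y, y \in C /\ 2 * y = mx C) <-> odd (2 * m).
  split; [case=> y [yC e]; by case: (nC y yC e) | clear; lia].
have sumE' : forall z, z < (2 * m) ^ 2 <-> exists x y, [/\ x \in R, y \in C & z = x + y].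
  by rewrite e4.
have eA : AofE R = A by rewrite /R AofE_Rof.
have eB : AofE C = B by rewrite /C AofE_Rof.
case: (mk_mid cR cC sumE' sR sC ctR ctC zR zC one) => M.
  by exists R, C; rewrite eA eB eS.
by exists C, R; rewrite eA eB eS fset2C.
Qed.

Lemma arO2 a b al be K : a <= al -> b <= be -> 1 <= K ->
  (K = a \/ K = b \/ K = a + b \/ K = ndist a b) -> al + be <= K -> al + be = K.
Proof. rewrite /ndist; lia. Qed.

Lemma arO3 a b al be K x y : al + be = K -> a <= al -> b <= be -> a + b <= K -> ndist a b <= K ->
  (x = al - a \/ x = al + a) -> (y = be - b \/ y = be + b) -> x + y < 2 * K + 1.
Proof. rewrite /ndist; lia. Qed.

Lemma arO4 a b al be K z : al + be = K -> a <= al -> b <= be -> z < 2 * K + 1 ->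
  (ndist z K = a + b \/ ndist z K = ndist a b) ->
  exists s t : bool, z = (if s then al + a else al - a) + (if t then be + b else be - b).
Proof.
move=> hab ha hb hz; rewrite /ndist => ew.
case: (leqP K z) => h; case: (leqP b a) => hba.
- case: ew => ew; [exists true, true | exists true, false]; lia.
- case: ew => ew; [exists true, true | exists false, true]; lia.
- case: ew => ew; [exists false, false | exists false, true]; lia.
- case: ew => ew; [exists false, false | exists true, false]; lia.
Qed.

Lemma extO al A x : x \in RofO al A -> exists a, (a = 0 \/ a \in A) /\ (x = al - a \/ x = al + a).
Proof.
case/RofOP => [->|[a [aA ex]]]; last by exists a; split => //; right.
by exists 0; split; [left | left; rewrite subn0].
Qed.

Lemma memO al A a (s : bool) : (a = 0 \/ a \in A) ->
  (if s then al + a else al - a) \in RofO al A.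
Proof.
case=> [->|aA]; first by apply/RofOP; left; case: s; rewrite ?addn0 ?subn0.
by apply/RofOP; right; exists a; split => //; case: s; [right|left].
Qed.

Lemma halfO al A : goodO al A -> al \in A ->
  [/\ mx (RofO al A) = 2 * al, symm (RofO al A), al \in RofO al A & 0 \in RofO al A].
Proof.
move=> g aA; have mR := mxRofO g aA; split => //.
- rewrite /symm mR => y /RofOP [->|[a [bA ey]]].
    by apply/RofOP; left; lia.
  have := g _ bA => gb.
  case: ey => ->; apply/RofOP; right; exists a; split => //; [right|left]; lia.
- by apply/RofOP; left.
- by apply/RofOP; right; exists al; split => //; left; rewrite subnn.
Qed.

Lemma arD z K : ndist z K != 0 -> z < 2 * K + 1 -> 1 <= ndist z K /\ ndist z K <= K.
Proof. rewrite /ndist; lia. Qed.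

Lemma sad_midO m S : 0 < m -> inclusive_SAD m S ->
  exists R C, Mid (2 * m + 1) R C /\ [fset AofO R; AofO C] = S.
Proof.
move=> m0 [A [B [[eS cA cB a0 b0] cov]]].
have e4 : (2 * m + 1) ^ 2 = 2 * (2 * m * (m + 1)) + 1 by nia.
have K1 : 1 <= 2 * m * (m + 1) by nia.
move: cov K1 e4; set K := 2 * m * (m + 1) => cov K1 e4; clearbody K.
have /fset0Pn [a1 a1A] : A != fset0 by rewrite -cardfs_gt0 cA.
have /fset0Pn [b1 b1B] : B != fset0 by rewrite -cardfs_gt0 cB.
have aM := mx_in a1A; have bM := mx_in b1B.
have posA a : a \in A -> 0 < a by move=> aA; rewrite lt0n; apply: contraNneq a0 => <-.
have posB b : b \in B -> 0 < b by move=> bB; rewrite lt0n; apply: contraNneq b0 => <-.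
have inA a : a \in A -> a <= K by move=> aA; have [] := (cov a).1 (or_introl aA).
have inB b : b \in B -> b <= K by move=> bB; have [] := (cov b).1 (or_intror (or_introl bB)).
have sumK a b : a \in A -> b \in B -> a + b <= K.
  by move=> aA bB; have [] := (cov (a + b)).1 (or_intror (or_intror (ex_intro _ a (ex_intro _ b (And3 aA bB (or_introl erefl)))))).
have difK a b : a \in A -> b \in B -> ndist a b <= K.
  by move=> aA bB; have [] := (cov (ndist a b)).1 (or_intror (or_intror (ex_intro _ a (ex_intro _ b (And3 aA bB (or_intror erefl)))))).
have gA : goodO (mx A) A by move=> a aA; rewrite posA //= mx_ge.
have gB : goodO (mx B) B by move=> b bB; rewrite posB //= mx_ge.
have hab : mx A + mx B = K.
  have hs := sumK _ _ aM bM.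
  have := (cov K).2 (conj K1 (leqnn K)); case=> [h|[h|[a [b [aA bB ex]]]]].
  - by have := mx_ge h; clear -hs; lia.
  - by have := mx_ge h; clear -hs; lia.
  - exact: (arO2 (mx_ge aA) (mx_ge bB) K1 (or_intror (or_intror ex)) hs).
have l0A a : a = 0 \/ a \in A -> a <= mx A by case=> [->|/mx_ge].
have l0B b : b = 0 \/ b \in B -> b <= mx B by case=> [->|/mx_ge].
have pairK a b : a = 0 \/ a \in A -> b = 0 \/ b \in B -> a + b <= K /\ ndist a b <= K.
  rewrite /ndist; case=> [->|aA]; case=> [->|bB].
  - by rewrite !subn0.
  - by rewrite add0n sub0n subn0 add0n; split; apply: inB.
  - by rewrite addn0 sub0n subn0 addn0; split; apply: inA.
  - split; [exact: sumK | exact: difK].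
set R := RofO (mx A) A; set C := RofO (mx B) B.
have [mR sR cR' zR] := halfO gA aM.
have [mC sC cC' zC] := halfO gB bM.
have sumO : forall z, z < 2 * K + 1 <-> exists x y, [/\ x \in R, y \in C & z = x + y].
  move=> z; split; last first.
    case=> x [y [/extO [a [ha ex]] /extO [b [hb ey]] ->]].
    have [h1 h2] := pairK _ _ ha hb.
    exact: (arO3 hab (l0A _ ha) (l0B _ hb) h1 h2 ex ey).
  move=> zlt.
  have [a [b [ha [hb ew]]]] : exists a b, (a = 0 \/ a \in A) /\ (b = 0 \/ b \in B) /\
      (ndist z K = a + b \/ ndist z K = ndist a b).
    case: (eqVneq (ndist z K) 0) => [d0|d0].
      by exists 0, 0; split; [left|split; [left|left; rewrite d0]].
    have [h|[h|[a [b [aA bB ex]]]]] := (cov (ndist z K)).2 (arD d0 zlt).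
    - by exists (ndist z K), 0; split; [right|split; [left|left; rewrite addn0]].
    - by exists 0, (ndist z K); split; [left|split; [right|left; rewrite add0n]].
    - by exists a, b; split; [right|split; [right|]].
  have [s [t ez]] := arO4 hab (l0A _ ha) (l0B _ hb) zlt ew.
  exists (if s then mx A + a else mx A - a), (if t then mx B + b else mx B - b).
  by split => //; apply: memO.
have one : 1 \in C \/ 1 \in R.
  have [x [y [xR yC e1]]] := (sumO 1).1 ltac:(clear -K1; lia).
  by case: (arOne e1) => e; [right; rewrite -e | left; rewrite -e].
have cR : #|` R| = 2 * m + 1 by rewrite cardRofO // cA addn1.
have cC : #|` C| = 2 * m + 1 by rewrite cardRofO // cB addn1.
have ctR : (exists y, y \in R /\ 2 * y = mx R) <-> odd (2 * m + 1).
  by split => _; [clear; lia | exists (mx A); split => //; rewrite mR].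
have ctC : (exists y, y \in C /\ 2 * y = mx C) <-> odd (2 * m + 1).
  by split => _; [clear; lia | exists (mx B); split => //; rewrite mC].
have sumE' : forall z, z < (2 * m + 1) ^ 2 <-> exists x y, [/\ x \in R, y \in C & z = x + y].
  by rewrite e4.
have eA : AofO R = A by rewrite /R AofO_Rof.
have eB : AofO C = B by rewrite /C AofO_Rof.
case: (mk_mid cR cC sumE' sR sC ctR ctC zR zC one) => M.
  by exists R, C; rewrite eA eB eS.
by exists C, R; rewrite eA eB eS fset2C.
Qed.


Definition Aof n R := if odd n then AofO R else AofE R.
Definition Rof n A := if odd n then RofO (mx A) A else RofE (mx A) A.

Lemma recGen n R : 1 < n -> #|` R| = n -> symm R -> 0 \in R ->
  ((exists y, y \in R /\ 2 * y = mx R) <-> odd n) -> Rof n (Aof n R) = R.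
Proof.
move=> n1 cR sR zR ctr; rewrite /Aof /Rof; case: ifP => on.
  have [y [yR ey]] := ctr.2 on.
  have ev : ~~ odd (mx R) by rewrite -ey; clear; lia.
  have hR' : (mx R)./2 \in R by rewrite -ey; have -> : (2 * y)./2 = y by clear; lia.
  have pos : 0 < (mx R)./2.
    rewrite ltnNge; apply/negP => h.
    have : R `<=` [fset 0].
      apply/fsubsetP => x xR; rewrite in_fset1; have := mx_ge xR; clear -h ev; lia.
    move/fsubset_leq_card; rewrite cardfs1 cR; clear -n1; lia.
  by rewrite on mxAO // recO.
have nc : forall y, y \in R -> 2 * y <> mx R.
  by move=> y yR e; have := ctr.1 (ex_intro _ y (conj yR e)); rewrite on.
have pos : 0 < mx R by rewrite lt0n; apply/eqP => e; apply: (nc 0 zR); rewrite e.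
by rewrite on mxAE // recE.
Qed.

Lemma fset2_eq (T : choiceType) (a b c d : T) : [fset a; b] = [fset c; d] ->
  (a = c /\ b = d) \/ (a = d /\ b = c).
Proof.
move=> e.
have ha : a \in [fset c; d] by rewrite -e in_fset2 eqxx.
have hb : b \in [fset c; d] by rewrite -e in_fset2 eqxx orbT.
have hc : c \in [fset a; b] by rewrite e in_fset2 eqxx.
have hd : d \in [fset a; b] by rewrite e in_fset2 eqxx orbT.
move: ha hb hc hd; rewrite !in_fset2.
by case/orP => /eqP ?; case/orP => /eqP ?; case/orP => /eqP ?; case/orP => /eqP ?; subst;
  first [by left | by right].
Qed.

Lemma psi_inj n R1 C1 R2 C2 : 1 < n -> Mid n R1 C1 -> Mid n R2 C2 ->
  [fset Aof n R1; Aof n C1] = [fset Aof n R2; Aof n C2] -> R1 = R2 /\ C1 = C2.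
Proof.
move=> n1 M1 M2 e.
have rR1 := recGen n1 (midR M1) (midsR M1) (mid0R M1) (midcR M1).
have rC1 := recGen n1 (midC M1) (midsC M1) (mid0C M1) (midcC M1).
have rR2 := recGen n1 (midR M2) (midsR M2) (mid0R M2) (midcR M2).
have rC2 := recGen n1 (midC M2) (midsC M2) (mid0C M2) (midcC M2).
case: (fset2_eq e) => [[e1 e2]|[e1 e2]].
  by split; [rewrite -rR1 -rR2 e1 | rewrite -rC1 -rC2 e2].
have h1 : R1 = C2 by rewrite -rR1 -rC2 e1.
have h2 : C1 = R2 by rewrite -rC1 -rR2 e2.
have one : 1 \in R2 by rewrite -h2; exact: (mid1C M1).
by have := mid_uniq M2 one (mid0R M2) (mid0C M2) (mid1C M2) erefl.
Qed.

Lemma sig_eq (A : Type) (P : A -> Prop) (a b : {x | P x}) : proj1_sig a = proj1_sig b -> a = b.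
Proof.
case: a b => [x px] [y py] /= e; subst y.
by rewrite (proof_irrelevance _ px py).
Qed.

Lemma inj_surj_bij (A B : Type) (f : A -> B) : injective f -> (forall b, exists a, f a = b) -> bijective f.
Proof.
move=> fi fs.
pose g b := proj1_sig (constructive_indefinite_description _ (fs b)).
have fg b : f (g b) = b by rewrite /g; case: constructive_indefinite_description.
by exists g => // a; apply: fi; rewrite fg.
Qed.

Lemma bij_inv (A B : Type) (f : A -> B) : bijective f -> exists g : B -> A, bijective g.
Proof. by case=> g c1 c2; exists g; exists f. Qed.

Section Final.
Variable m : nat.
Hypothesis hm : 1 <= m.

Lemma hnE : 1 < 2 * m. Proof. lia. Qed.
Lemma hnO : 1 < 2 * m + 1. Proof. lia. Qed.

Definition MidT n := {p : {fset nat} * {fset nat} | Mid n p.1 p.2}.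

Lemma sq_mid_bij n (hn : 1 < n) :
  exists f : {M : 'M[int]_n | principal_reversible_square M} -> MidT n, bijective f.
Proof.
exists (fun M => exist (fun p => Mid n p.1 p.2) (Rs hn (proj1_sig M), Cs hn (proj1_sig M))
                   (sq_mid hn (proj2_sig M))).
apply: inj_surj_bij.
  move=> [M1 h1] [M2 h2] /(congr1 (@proj1_sig _ _)) /= [e1 e2].
  by apply: sig_eq => /=; exact: (sq_inj h1 h2 e1 e2).
move=> [[R C] hM] /=.
have [M [hP eR eC]] := sq_surj hn hM.
by exists (exist _ M hP); apply: sig_eq => /=; rewrite eR eC.
Qed.

Lemma mid_sad_bijE :
  exists f : MidT (2 * m) -> {S : {fset {fset nat}} | noninclusive_SAD m S}, bijective f.
Proof.
exists (fun p => exist _ [fset AofE (proj1_sig p).1; AofE (proj1_sig p).2]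
                   (mid_sadE hm (proj2_sig p))).
have eA R : Aof (2 * m) R = AofE R by rewrite /Aof ifF //; lia.
apply: inj_surj_bij.
  move=> [[R1 C1] h1] [[R2 C2] h2] /(congr1 (@proj1_sig _ _)) /= e.
  have := @psi_inj (2 * m) R1 C1 R2 C2 hnE h1 h2; rewrite !eA => /(_ e) [eR eC].
  by apply: sig_eq => /=; rewrite eR eC.
move=> [S hS].
have [R [C [hM eS]]] := sad_midE hm hS.
by exists (exist (fun p => Mid (2 * m) p.1 p.2) (R, C) hM); apply: sig_eq.
Qed.

Lemma mid_sad_bijO :
  exists f : MidT (2 * m + 1) -> {S : {fset {fset nat}} | inclusive_SAD m S}, bijective f.
Proof.
exists (fun p => exist _ [fset AofO (proj1_sig p).1; AofO (proj1_sig p).2]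
                   (mid_sadO hm (proj2_sig p))).
have eA R : Aof (2 * m + 1) R = AofO R by rewrite /Aof ifT //; lia.
apply: inj_surj_bij.
  move=> [[R1 C1] h1] [[R2 C2] h2] /(congr1 (@proj1_sig _ _)) /= e.
  have := @psi_inj (2 * m + 1) R1 C1 R2 C2 hnO h1 h2; rewrite !eA => /(_ e) [eR eC].
  by apply: sig_eq => /=; rewrite eR eC.
move=> [S hS].
have [R [C [hM eS]]] := sad_midO hm hS.
by exists (exist (fun p => Mid (2 * m + 1) p.1 p.2) (R, C) hM); apply: sig_eq.
Qed.

End Final.

Theorem theorem5 (m : nat) (hm : (1 <= m)%N) :
  (exists f : {S : {fset {fset nat}} | noninclusive_SAD m S} ->
              {M : 'M[int]_(2 * m) | principal_reversible_square M},
      bijective f) /\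
  (exists g : {S : {fset {fset nat}} | inclusive_SAD m S} ->
              {M : 'M[int]_(2 * m + 1) | principal_reversible_square M},
      bijective g).
Proof.
split.
  have [f1 b1] := sq_mid_bij (hnE hm).
  have [f2 b2] := mid_sad_bijE hm.
  exact: bij_inv (bij_comp b2 b1).
have [f1 b1] := sq_mid_bij (hnO hm).
have [f2 b2] := mid_sad_bijO hm.
exact: bij_inv (bij_comp b2 b1).
Qed.
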